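(* $\delta(1)\le 4$; that is, $1\in E_4$: every multiset of four decimal digits can be condensed into $1$.
   Context: For a finite nonempty multiset $S$ of real numbers, $V(S)$ is the smallest set of real numbers such that: (1) if $|S|=1$ then $S\subseteq V(S)$; (2) if $|S|\ge 2$, then for all nonempty multisets $A,B$ with $A+B=S$ (multiplicities add) and all $a\in V(A)$, $b\in V(B)$, each of $a+b,\ a-b,\ b-a,\ ab,\ a/b,\ b/a,\ a^b,\ b^a$ lies in $V(S)$ whenever it is a well-defined real number; (3) if $a\in V(S)$ is a nonnegative integer then $a!\in V(S)$ (with $0!=1$). Let $D=\{0,\dots,9\}$; for $k\ge1$, $E_k$ is the intersection of $V(S)$ over all multisets $S$ of size $k$ with all elements in $D$. For a number $n$, $\delta(n)=\min\{k\ge1: n\in E_k\}$. *)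

(* Defs.v *)
From Stdlib Require Import Reals ZArith List Permutation.
Import ListNotations.
Open Scope R_scope.

(* z is the value of x^y, whenever x^y is a well-defined real number:
   - x > 0, any real y : x^y = Rpower x y (= exp (y ln x));
   - x = 0, y > 0      : 0^y = 0;
   - x < 0, y integer  : x^y = powerRZ x y.
   (0^0, 0^(negative), and negative bases with non-integer exponents are
   treated as undefined.) *)
Definition pow_rel (x y z : R) : Prop :=
  (0 < x /\ z = Rpower x y)
  \/ (x = 0 /\ 0 < y /\ z = 0)
  \/ (x < 0 /\ exists k : Z, y = IZR k /\ z = powerRZ x k).

Definition combine (a b c : R) : Prop :=
  c = a + b \/ c = a - b \/ c = b - a \/ c = a * b
  \/ (b <> 0 /\ c = a / b) \/ (a <> 0 /\ c = b / a)
  \/ pow_rel a b c \/ pow_rel b a c.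

(* Multisets are represented by lists; A + B = S is Permutation S (A ++ B).
   V S x  means  x ∈ V(S); the inductive definition gives the smallest set. *)
Inductive V : list R -> R -> Prop :=
| V_single : forall x : R, V [x] x
| V_comb : forall (S A B : list R) (a b c : R),
    A <> [] -> B <> [] -> Permutation S (A ++ B) ->
    V A a -> V B b -> combine a b c -> V S c
| V_fact : forall (S : list R) (n : nat),
    V S (INR n) -> V S (INR (fact n)).

Definition E (k : nat) (x : R) : Prop :=
  forall l : list nat, length l = k -> Forall (fun d => (d <= 9)%nat) l ->
    V (map INR l) x.

(* Main.v *)
Require Import Defs.
From Stdlib Require Import Reals ZArith List Permutation Lia Lra.
Import ListNotations.
Open Scope R_scope.

Lemma V_perm_aux : forall S x, V S x -> forall T, Permutation S T -> V T x.
Proof.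
  induction 1; intros T HP.
  - apply Permutation_length_1_inv in HP. subst. constructor.
  - apply (V_comb T A B a b c); auto. eapply perm_trans; [apply Permutation_sym; exact HP|exact H1].
  - apply V_fact. auto.
Qed.

Lemma V_perm : forall S T x, V S x -> Permutation S T -> V T x.
Proof. intros; eapply V_perm_aux; eauto. Qed.

Lemma V_nonempty : forall S, S <> [] -> exists x, V S x.
Proof.
  induction S as [|y t IH]; intros H; [congruence|].
  destruct t as [|z t'].
  - exists y. constructor.
  - destruct IH as [b Hb]; [discriminate|].
    exists (y + b). apply (V_comb _ [y] (z::t') y b); try discriminate.
    + apply Permutation_refl.
    + constructor.
    + exact Hb.
    + left; reflexivity.
Qed.

Lemma zero_one : forall S, V S 0 -> V S 1.
Proof. intros S H. change (V S (INR (fact 0))). apply V_fact. exact H. Qed.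

Lemma sub0 : forall S A B, A <> [] -> B <> [] -> S = A ++ B -> V A 0 -> V S 1.
Proof.
  intros S A B HA HB HS H0. apply zero_one.
  destruct (V_nonempty B HB) as [b Hb].
  apply (V_comb S A B 0 b); auto. rewrite HS; apply Permutation_refl.
  right; right; right; left; ring.
Qed.

Lemma sub1 : forall S A B, A <> [] -> B <> [] -> S = A ++ B -> V A 1 -> V S 1.
Proof.
  intros S A B HA HB HS H0.
  destruct (V_nonempty B HB) as [b Hb].
  apply (V_comb S A B 1 b); auto. rewrite HS; apply Permutation_refl.
  right; right; right; right; right; right; left. left. split; [lra|].
  unfold Rpower. rewrite ln_1, Rmult_0_r, exp_0. reflexivity.
Qed.

Lemma pair_op : forall x y c, Defs.combine x y c -> V [x;y] c.
Proof.
  intros x y c H. apply (V_comb _ [x] [y] x y c).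
  - discriminate.
  - discriminate.
  - apply Permutation_refl.
  - constructor.
  - constructor.
  - exact H.
Qed.

Definition P (x y z w : R) : Prop :=
  x = 0 \/ x = 1 \/ x = y \/ x = y + 1 \/ x + y = z \/ x + w = y + z.

Lemma condR : forall x y z w, P x y z w -> V [x;y;z;w] 1.
Proof.
  intros x y z w [H|[H|[H|[H|[H|H]]]]].
  - apply (sub0 _ [x] [y;z;w]); try discriminate; auto. subst; constructor.
  - apply (sub1 _ [x] [y;z;w]); try discriminate; auto. subst; constructor.
  - apply (sub0 _ [x;y] [z;w]); try discriminate; auto. apply pair_op.
    right; left; lra.
  - apply (sub1 _ [x;y] [z;w]); try discriminate; auto. apply pair_op.
    right; left; lra.
  - apply (sub0 _ [x;y;z] [w]); try discriminate; auto.
    apply (V_comb _ [x;y] [z] (x+y) z 0); try discriminate.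
    apply Permutation_refl. apply pair_op. left; reflexivity.
    constructor. right; left; lra.
  - apply zero_one.
    apply (V_comb _ [x;y] [z;w] (x-y) (z-w) 0); try discriminate.
    apply Permutation_refl. apply pair_op. right; left; reflexivity.
    apply pair_op. right; left; reflexivity.
    right; left; lra.
Qed.

Definition condb (x y z w : nat) : bool :=
  (Nat.eqb x 0 || Nat.eqb x 1 || Nat.eqb x y || Nat.eqb x (y+1) || Nat.eqb (x+y) z
   || Nat.eqb (x+w) (y+z))%bool.

Lemma condb_R : forall x y z w, condb x y z w = true -> P (INR x) (INR y) (INR z) (INR w).
Proof.
  intros x y z w H. unfold condb in H.
  repeat rewrite Bool.orb_true_iff in H. unfold P.
  destruct H as [[[[[H|H]|H]|H]|H]|H]; apply Nat.eqb_eq in H.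
  - left; subst; reflexivity.
  - right; left; subst; reflexivity.
  - do 2 right; left; subst; reflexivity.
  - do 3 right; left; subst; rewrite plus_INR; reflexivity.
  - do 4 right; left; rewrite <- !plus_INR; f_equal; exact H.
  - do 5 right; rewrite <- !plus_INR; f_equal; exact H.
Qed.

Definition check (a b c d : nat) : bool := (condb a b c d || condb a b d c || condb a c b d || condb a c d b || condb a d b c || condb a d c b || condb b a c d || condb b a d c || condb b c a d || condb b c d a || condb b d a c || condb b d c a || condb c a b d || condb c a d b || condb c b a d || condb c b d a || condb c d a b || condb c d b a || condb d a b c || condb d a c b || condb d b a c || condb d b c a || condb d c a b || condb d c b a)%bool.

Lemma check_all : forallb (fun a => forallb (fun b => forallb (fun c => forallb (fun d =>
   check a b c d) (seq 0 10)) (seq 0 10)) (seq 0 10)) (seq 0 10) = true.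
Proof. vm_compute. reflexivity. Qed.

Lemma check_ok : forall a b c d, (a <= 9)%nat -> (b <= 9)%nat -> (c <= 9)%nat -> (d <= 9)%nat ->
  check a b c d = true.
Proof.
  intros a b c d Ha Hb Hc Hd. pose proof check_all as H.
  rewrite forallb_forall in H. specialize (H a). rewrite forallb_forall in H.
  specialize (H ltac:(apply in_seq; lia) b). rewrite forallb_forall in H.
  specialize (H ltac:(apply in_seq; lia) c). rewrite forallb_forall in H.
  specialize (H ltac:(apply in_seq; lia) d). apply H. apply in_seq; lia.
Qed.

Ltac rm x r := match r with | x :: ?t => constr:(t) | ?y :: ?t => let t' := rm x t in constr:(y :: t') end.
Ltac pmove := match goal with
 | |- Permutation (?x :: ?t) (?x :: ?t) => apply Permutation_refl
 | |- Permutation (?x :: ?y :: ?t) (?y :: ?r) =>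
     apply perm_trans with (y :: x :: t); [apply perm_swap | apply perm_skip; pmove]
end.
Ltac psolve := match goal with
 | |- Permutation nil nil => apply perm_nil
 | |- Permutation (?x :: ?l) ?r => let r' := rm x r in
      apply perm_trans with (x :: r'); [apply perm_skip; psolve | pmove]
end.

Theorem lemma5p1 : E 4 1.
Proof.
  intros l Hl HF.
  destruct l as [|a [|b [|c [|d [|e l]]]]]; simpl in Hl; try discriminate.
  inversion HF as [|? ? Ha HF1]; subst. inversion HF1 as [|? ? Hb HF2]; subst.
  inversion HF2 as [|? ? Hc HF3]; subst. inversion HF3 as [|? ? Hd HF4]; subst.
  pose proof (check_ok a b c d Ha Hb Hc Hd) as H. unfold check in H. simpl map.
  repeat rewrite Bool.orb_true_iff in H.
  repeat match type of H with _ \/ _ => destruct H as [H|H] end.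
  - apply (V_perm [INR a; INR b; INR c; INR d]); [apply condR; apply condb_R; exact H | psolve].
  - apply (V_perm [INR a; INR b; INR d; INR c]); [apply condR; apply condb_R; exact H | psolve].
  - apply (V_perm [INR a; INR c; INR b; INR d]); [apply condR; apply condb_R; exact H | psolve].
  - apply (V_perm [INR a; INR c; INR d; INR b]); [apply condR; apply condb_R; exact H | psolve].
  - apply (V_perm [INR a; INR d; INR b; INR c]); [apply condR; apply condb_R; exact H | psolve].
  - apply (V_perm [INR a; INR d; INR c; INR b]); [apply condR; apply condb_R; exact H | psolve].
  - apply (V_perm [INR b; INR a; INR c; INR d]); [apply condR; apply condb_R; exact H | psolve].
  - apply (V_perm [INR b; INR a; INR d; INR c]); [apply condR; apply condb_R; exact H | psolve].
  - apply (V_perm [INR b; INR c; INR a; INR d]); [apply condR; apply condb_R; exact H | psolve].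
  - apply (V_perm [INR b; INR c; INR d; INR a]); [apply condR; apply condb_R; exact H | psolve].
  - apply (V_perm [INR b; INR d; INR a; INR c]); [apply condR; apply condb_R; exact H | psolve].
  - apply (V_perm [INR b; INR d; INR c; INR a]); [apply condR; apply condb_R; exact H | psolve].
  - apply (V_perm [INR c; INR a; INR b; INR d]); [apply condR; apply condb_R; exact H | psolve].
  - apply (V_perm [INR c; INR a; INR d; INR b]); [apply condR; apply condb_R; exact H | psolve].
  - apply (V_perm [INR c; INR b; INR a; INR d]); [apply condR; apply condb_R; exact H | psolve].
  - apply (V_perm [INR c; INR b; INR d; INR a]); [apply condR; apply condb_R; exact H | psolve].
  - apply (V_perm [INR c; INR d; INR a; INR b]); [apply condR; apply condb_R; exact H | psolve].
  - apply (V_perm [INR c; INR d; INR b; INR a]); [apply condR; apply condb_R; exact H | psolve].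
  - apply (V_perm [INR d; INR a; INR b; INR c]); [apply condR; apply condb_R; exact H | psolve].
  - apply (V_perm [INR d; INR a; INR c; INR b]); [apply condR; apply condb_R; exact H | psolve].
  - apply (V_perm [INR d; INR b; INR a; INR c]); [apply condR; apply condb_R; exact H | psolve].
  - apply (V_perm [INR d; INR b; INR c; INR a]); [apply condR; apply condb_R; exact H | psolve].
  - apply (V_perm [INR d; INR c; INR a; INR b]); [apply condR; apply condb_R; exact H | psolve].
  - apply (V_perm [INR d; INR c; INR b; INR a]); [apply condR; apply condb_R; exact H | psolve].
Qed.
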